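(* Let $1<p<\infty$, $p^*=p/(p-1)$, let $E,F,G$ be Banach spaces, $u\in\mathcal{L}(E;F)$ and $v\in\mathcal{L}(F;G)$. If the adjoint $u^*\colon F^*\to E^*$ is absolutely mid $p^*$-summing and the adjoint $v^*\colon G^*\to F^*$ is weakly mid $p^*$-summing, then $v\circ u$ is Cohen strongly $p$-summing.
   Context: For a Banach space $X$ and $1\le r\le\infty$: $\ell_r(X)$ absolutely $r$-summable sequences; $\ell_r^w(X)$ sequences with $\sup_{x^*\in B_{X^*}}\|(x^*(x_j))_j\|_r<\infty$; for $r<\infty$, $\ell_r^{mid}(X)$ the $(x_j)\in\ell_r^w(X)$ with $\sum_n\sum_j|x_n^*(x_j)|^r<\infty$ for every $(x_n^* )\in\ell_r^w(X^* )$; $\ell_p\langle X\rangle$ the $(x_j)$ with $\sup_{(x_j^* )\in B_{\ell_{p^*}^w(X^* )}}\sum_j|x_j^*(x_j)|<\infty$. A bounded linear $T\colon X\to Y$ is absolutely mid $r$-summing if $(T(x_j))\in\ell_r(Y)$ whenever $(x_j)\in\ell_r^{mid}(X)$; weakly mid $r$-summing if $(T(x_j))\in\ell_r^{mid}(Y)$ whenever $(x_j)\in\ell_r^w(X)$; Cohen strongly $p$-summing if $(T(x_j))\in\ell_p\langle Y\rangle$ whenever $(x_j)\in\ell_p(X)$. *)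

(* Defs.v *)
From HB Require Import structures.
From mathcomp Require Import all_boot all_order all_algebra.
From mathcomp Require Import all_classical all_reals all_analysis.
Set Implicit Arguments. Unset Strict Implicit. Unset Printing Implicit Defensive.
Import Order.TTheory GRing.Theory Num.Theory.
Import numFieldNormedType.Exports.
Local Open Scope classical_set_scope.
Local Open Scope ring_scope.

(* A (real) normed space presented concretely: a carrier, the set of its
   genuine elements, the vector operations and the norm.  This presentation
   is used so that duals, biduals and tridual can be iterated. *)
Record nspace (R : realType) := NSpace {
  nsT :> Type;
  nsE : set nsT;
  nsadd : nsT -> nsT -> nsT;
  nsscale : R -> nsT -> nsT;
  nsnorm : nsT -> R }.
Arguments nsE {R} n _.
Arguments nsadd {R} n _ _.
Arguments nsscale {R} n _ _.
Arguments nsnorm {R} n _.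

Definition ns (R : realType) (X : completeNormedModType R) : nspace R :=
  @NSpace R X setT (fun x y => x + y) (fun a x => a *: x) (fun x => `|x|).

Definition blin_functional (R : realType) (N : nspace R) (f : N -> R) : Prop :=
  [/\ (forall x y, nsE N x -> nsE N y -> f (nsadd N x y) = f x + f y),
      (forall a x, nsE N x -> f (nsscale N a x) = a * f x) &
      (exists C : R, forall x, nsE N x -> `|f x| <= C * nsnorm N x)].

Definition dual (R : realType) (N : nspace R) : nspace R :=
  @NSpace R (N -> R) (@blin_functional R N)
    (fun f g x => f x + g x) (fun a f x => a * f x)
    (fun f => sup [set `|f x| | x in [set x | nsE N x /\ nsnorm N x <= 1]]).

Definition dual_ball (R : realType) (N : nspace R) : set (N -> R) :=
  [set f | nsE (dual N) f /\ nsnorm (dual N) f <= 1].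
Arguments dual_ball {R} N _.

Definition psum (R : realType) (r : R) (a : nat -> R) : \bar R :=
  (\sum_(j <oo) (`|a j| `^ r)%:E)%E.

Definition seq_in (R : realType) (N : nspace R) (x : nat -> N) : Prop :=
  forall j, nsE N (x j).

Definition strong_seq (R : realType) (N : nspace R) (r : R) (x : nat -> N) :=
  seq_in x /\ (psum r (fun j => nsnorm N (x j)) < +oo)%E.

(* r-th power of the weak l_r norm:
   sup_{x^* in B_{N^*}} sum_j |x^*(x_j)|^r. *)
Definition weak_normr (R : realType) (N : nspace R) (r : R) (x : nat -> N)
  : \bar R := ereal_sup [set psum r (fun j => f (x j)) | f in dual_ball N].

Definition weak_seq (R : realType) (N : nspace R) (r : R) (x : nat -> N) :=
  seq_in x /\ (weak_normr r x < +oo)%E.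

Definition mid_seq (R : realType) (N : nspace R) (r : R) (x : nat -> N) :=
  weak_seq r x /\
  forall y : nat -> dual N, weak_seq r y ->
    (\sum_(n <oo) \sum_(j <oo) (`|y n (x j)| `^ r)%:E < +oo)%E.

Definition cohen_seq (R : realType) (N : nspace R) (p : R) (x : nat -> N) :=
  seq_in x /\
  (ereal_sup [set (\sum_(j <oo) (`|g j (x j)|)%:E)%E
     | g in [set g : nat -> dual N |
              seq_in g /\ (weak_normr (p / (p - 1)) g <= 1)%E]] < +oo)%E.

Definition abs_mid_summing (R : realType) (M N : nspace R) (T : M -> N) (r : R) :=
  forall x : nat -> M, mid_seq r x -> strong_seq r (T \o x).

Definition weak_mid_summing (R : realType) (M N : nspace R) (T : M -> N) (r : R) :=
  forall x : nat -> M, weak_seq r x -> mid_seq r (T \o x).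

Definition cohen_summing (R : realType) (M N : nspace R) (T : M -> N) (p : R) :=
  forall x : nat -> M, strong_seq p x -> cohen_seq p (T \o x).

Definition adjoint (R : realType) (E F : completeNormedModType R) (u : E -> F)
  : dual (ns F) -> dual (ns E) := fun f => f \o u.

(* Main.v *)
Require Import Defs.
From HB Require Import structures.
From mathcomp Require Import all_boot all_order all_algebra.
From mathcomp Require Import all_classical all_reals all_analysis.
From mathcomp Require Import lra ring zify.
Import Order.TTheory GRing.Theory Num.Theory.
Import numFieldNormedType.Exports.
Local Open Scope classical_set_scope.
Local Open Scope ring_scope.

Section Helpers.
Variable R : realType.

Lemma blin0 (N : nspace R) (f : N -> R) x : blin_functional f -> nsE N x ->
  f (nsscale N 0 x) = 0.
Proof. by case=> _ hs _ hx; rewrite hs // mul0r. Qed.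

Lemma dual_bound (X : completeNormedModType R) (f : X -> R) :
  blin_functional (N := ns X) f -> forall x : X, `|f x| <= nsnorm (dual (ns X)) f * `|x|.
Proof.
move=> hf; have [ha hs [C hC]] := hf.
set S := [set `|f x| | x in [set x : X | (ns X).(nsE) x /\ `|x| <= 1]].
have hS : has_sup S.
  split; first by exists `|f 0|; exists 0; split => //; rewrite normr0.
  exists `|C| => _ [x [_ hx] <-].
  apply: le_trans (hC x I) _; apply: le_trans (ler_norm _) _.
  by rewrite normrM ler_piMr // normr_id.
have f0 : f 0 = 0.
  by have := hs 0 0 I; rewrite /= scale0r mul0r.
move=> x; have [->|x0] := eqVneq x 0; first by rewrite f0 !normr0 mulr0.
have nx : 0 < `|x| by rewrite normr_gt0.
have := sup_upper_bound hS.
move=> /(_ `|f (`|x|^-1 *: x)|) H.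
have : `|f (`|x|^-1 *: x)| <= nsnorm (dual (ns X)) f.
  apply: H; exists (`|x|^-1 *: x) => //; split => //.
  by rewrite normrZ normrV ?unitfE ?gt_eqF // normr_id mulVf ?gt_eqF.
have -> : f (`|x|^-1 *: x) = `|x|^-1 * f x by apply: (hs _ x I).
rewrite normrM normrV ?unitfE ?gt_eqF // normr_id.
by rewrite ler_pdivrMl // mulrC.
Qed.


Lemma dual_zero (X : completeNormedModType R) :
  nsnorm (dual (ns X)) (fun _ => 0) <= 1.
Proof.
apply: ge_sup; first by exists `|(0:R)|; exists 0 => //; split => //=; rewrite normr0.
by move=> _ [x _ <-]; rewrite normr0.
Qed.

Lemma dual_zero_E (X : completeNormedModType R) :
  nsE (dual (ns X)) (fun _ => 0).
Proof.
split => //=; first by move=> *; rewrite addr0.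
  by move=> *; rewrite mulr0.
by exists 0 => x _; rewrite normr0 mul0r.
Qed.

Lemma ev_ball (G : completeNormedModType R) (y : G) : `|y| <= 1 ->
  dual_ball (dual (ns G)) (fun f => f y).
Proof.
move=> y1; split.
  split => //.
  exists `|y| => f hf; rewrite mulrC; exact: dual_bound.
apply: ge_sup.
  exists `|(0:R)|; exists (fun _ => 0) => //; split; [exact: dual_zero_E|exact: dual_zero].
move=> _ [f [hf hn] <-] /=.
have := @dual_bound G f hf y => h.
have := normr_ge0 y => h0.
nra.
Qed.

Lemma term_le_series (u : nat -> \bar R) j : (forall i, (0 <= u i)%E) ->
  (u j <= \sum_(i <oo) u i)%E.
Proof.
move=> u0; rewrite (@nneseriesD1 _ u j xpredT) //.
by rewrite leeDl // nneseries_ge0.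
Qed.

Lemma weak_pointwise (G : completeNormedModType R) (r : R) (g : nat -> dual (ns G)) :
  0 < r -> seq_in g -> (weak_normr r g <= 1)%E ->
  forall j (y : G), `|g j y| <= `|y|.
Proof.
move=> r0 hg hw j y.
apply: le_trans (@dual_bound G (g j) (hg j) y) _.
apply: ler_piMl => //.
apply: ge_sup; first by exists `|g j 0|; exists 0 => //; split => //=; rewrite normr0.
move=> _ [z [_ hz] <-].
have hps : (psum r (fun f => (fun h => h z) (g f)) <= 1)%E.
  apply: le_trans hw; apply: ereal_sup_ubound; exists (fun h => h z) => //.
  exact: ev_ball.
have : ((`|g j z| `^ r)%:E <= 1)%E.
  apply: le_trans hps; apply: (@term_le_series (fun i => (`|g i z| `^ r)%:E)).
  by move=> i; rewrite lee_fin powR_ge0.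
rewrite lee_fin => h1.
rewrite leNgt; apply/negP => hlt.
have := gt0_ltr_powR r0 (x := 1) (y := `|g j z|).
rewrite !nnegrE ler01 normr_ge0 powR1 => /(_ isT isT hlt).
by rewrite ltNge h1.
Qed.


Lemma series_gt (u : nat -> \bar R) (a : \bar R) : (forall i, (0 <= u i)%E) ->
  (a < \sum_(i <oo) u i)%E -> exists n, (a < \sum_(0 <= i < n) u i)%E.
Proof.
move=> u0 ha.
have hc := ereal_nondecreasing_cvgn (ereal_nondecreasing_series (P := xpredT) (N := 0%N) (fun n _ _ => u0 n)).
have := cvg_lim _ hc; move=> /(_ _) h.
rewrite h // in ha.
by have [_ [n _ <-] hn] := ereal_sup_gt ha; exists n.
Qed.

Lemma young_le (p a b : R) : 1 < p -> 0 <= a -> 0 <= b ->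
  a * b <= a `^ (p / (p - 1)) + b `^ p.
Proof.
move=> p1 a0 b0.
have p0 : 0 < p by apply: lt_trans p1.
have pm : 0 < p - 1 by rewrite subr_gt0.
have q0 : 0 < p / (p - 1) by rewrite divr_gt0.
have q1 : 1 <= p / (p - 1) by rewrite ler_pdivlMr // mul1r lerBlDr lerDl.
have := @conjugate_powR R a b (p / (p - 1)) p a0 b0 q0 p0.
have -> : (p / (p - 1))^-1 + p^-1 = 1.
  by rewrite invf_div; field; rewrite ?gt_eqF.
move=> /(_ erefl) h; apply: le_trans h _; apply: lerD.
  by rewrite ler_pdivrMr // ler_peMr // powR_ge0.
by rewrite ler_pdivrMr // ler_peMr // ?powR_ge0 // ltW.
Qed.

Lemma scale_blin (N : nspace R) (f : N -> R) (c : R) :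
  blin_functional f -> blin_functional (fun z => c * f z).
Proof.
case=> ha hs [C hC]; split.
- by move=> x y hx hy; rewrite ha // mulrDr.
- by move=> a x hx; rewrite hs // mulrCA.
- exists (`|c| * C) => x hx; rewrite normrM -mulrA; apply: ler_wpM2l => //; exact: hC.
Qed.

Lemma powc_le (c a q : R) : 0 < c <= 1 -> 1 <= q ->
  `|c * a| `^ q <= c * `|a| `^ q.
Proof.
move=> /andP[c0 c1] q1.
rewrite normrM gtr0_norm // powRM ?(ltW c0) //.
apply: ler_wpM2r; first exact: powR_ge0.
by apply: ge1r_powR => //; rewrite c0 c1.
Qed.

Lemma geo_le1 : (\sum_(k <oo) ((2^-1 : R) * 2^-1 ^+ k)%:E <= 1)%E.
Proof.
apply: lime_le.
  by apply: is_cvg_nneseries => n _ _; rewrite lee_fin mulr_ge0 // exprn_ge0.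
apply: nearW => n; rewrite sumEFin lee_fin.
have h2 : (0 : R) < 2^-1 by rewrite invr_gt0.
have h3 : `|(2^-1 : R)| < 1 by rewrite gtr0_norm // invf_lt1 // ltr1n.
have h := @geometric_le_lim R n (2^-1) (2^-1) (ltW h2) h2 h3.
apply: le_trans h _.
have -> : (2^-1 : R) * (1 - 2^-1)^-1 = 1 by field.
done.
Qed.

End Helpers.

Section Main.
Variables (R : realType) (E F G : completeNormedModType R)
    (u : {linear E -> F}) (v : {linear F -> G}) (p : R).
Hypothesis p1 : 1 < p.
Hypothesis hU : abs_mid_summing (@adjoint R E F u) (p / (p - 1)).
Hypothesis hV : weak_mid_summing (@adjoint R F G v) (p / (p - 1)).

Lemma finite_g (x : nat -> ns E) (g : nat -> dual (ns G)) :
  strong_seq p x -> weak_seq (p / (p - 1)) g ->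
  (\sum_(j <oo) (`|g j (v (u (x j)))|)%:E < +oo)%E.
Proof.
move=> hx hg.
have hs := @hU _ (@hV g hg).
case: hs => hw hsum; case: hx => _ hxs.
set w := (fun j => adjoint u (adjoint v (g j))) in hw hsum.
apply: (@le_lt_trans _ _ (\sum_(j <oo) ((`|nsnorm (dual (ns E)) (w j)| `^ (p / (p - 1)))%:E
    + (`|nsnorm (ns E) (x j)| `^ p)%:E))%E).
  apply: lee_nneseries => [i _ _|n _]; first by rewrite lee_fin.
  rewrite -EFinD lee_fin.
  have hy := @young_le _ _ _ _ p1 (normr_ge0 (nsnorm (dual (ns E)) (w n))) (normr_ge0 (nsnorm (ns E) (x n))).
  apply: (le_trans _ hy).
  have := @dual_bound R E (w n) (hw n) (x n).
  move=> h; apply: le_trans h _.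
  by apply: le_trans (ler_norm _) _; rewrite normrM.
rewrite nneseriesD; last 2 first.
  by move=> *; rewrite lee_fin powR_ge0.
  by move=> *; rewrite lee_fin powR_ge0.
exact: lte_add_pinfty.
Qed.


Definition gball (g : nat -> dual (ns G)) :=
  seq_in g /\ (weak_normr (p / (p - 1)) g <= 1)%E.

Lemma q_gt0 : 0 < p / (p - 1).
Proof. by rewrite divr_gt0 ?subr_gt0 //; apply: lt_trans p1. Qed.

Lemma q_ge1 : 1 <= p / (p - 1).
Proof.
have pm : 0 < p - 1 by rewrite subr_gt0.
by rewrite ler_pdivlMr // mul1r lerBlDr lerDl.
Qed.

Lemma step (x : nat -> ns E) :
  (ereal_sup [set (\sum_(j <oo) (`|g j (((v \o u) \o x) j)|)%:E)%E
     | g in [set g : nat -> dual (ns G) |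
              seq_in g /\ (weak_normr (p / (p - 1)) g <= 1)%E]] = +oo)%E ->
  forall N (t : R), exists M, exists g, (N < M)%N /\ gball g /\
    t <= \sum_(N <= j < M) `|g j (v (u (x j)))|.
Proof.
move=> Sinf N t.
set H := \sum_(0 <= j < N) `|v (u (x j))|.
have : ((H + t)%:E < +oo)%E by rewrite ltey.
rewrite -Sinf => /ereal_sup_gt [_ [g hg <-] hlt].
have [n hn] := @series_gt _ _ _ (fun i => (eqbRL (lee_fin _ _) (normr_ge0 _))) hlt.
move: hn; rewrite sumEFin lte_fin => hn.
exists (maxn n N.+1), g; split; first by rewrite leq_max leqnn orbT.
split; first exact: hg.
have hNM : (N <= maxn n N.+1)%N by rewrite leq_max leqnSn orbT.
have hnM : (n <= maxn n N.+1)%N by rewrite leq_max leqnn.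
set f := fun j => `|g j (v (u (x j)))|.
have e1 : \sum_(0 <= j < maxn n N.+1) f j = \sum_(0 <= j < N) f j + \sum_(N <= j < maxn n N.+1) f j.
  by apply: big_cat_nat.
have e2 : \sum_(0 <= j < maxn n N.+1) f j = \sum_(0 <= j < n) f j + \sum_(n <= j < maxn n N.+1) f j.
  by apply: big_cat_nat.
have t2 : 0 <= \sum_(n <= j < maxn n N.+1) `|g j (v (u (x j)))|.
  by apply: sumr_ge0 => *.
have hh : \sum_(0 <= j < N) `|g j (v (u (x j)))| <= H.
  apply: ler_sum => j _.
  case: hg => hg1 hg2.
  exact: (@weak_pointwise R G _ g q_gt0 hg1 hg2).
rewrite /= in e1 e2.
lra.
Qed.


Lemma main_res : cohen_summing (M := ns E) (N := ns G) (v \o u) p.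
Proof.
move=> x hx; split; first by [].
rewrite ltey; apply/eqP => Sinf.
pose c := fun k : nat => (2^-1 : R) * 2^-1 ^+ k.
have c0 k : 0 < c k by rewrite /c mulr_gt0 ?exprn_gt0 ?invr_gt0.
have c1 k : c k <= 1.
  rewrite /c; apply: mulr_ile1; rewrite ?exprn_ge0 ?invr_ge0 ?exprn_ile1 ?invf_le1 ?invr_ge0 ?ler1n //.
have /choice [pick hpick] : forall Nk : nat * nat, exists Mg : nat * (nat -> dual (ns G)),
   (Nk.1 < Mg.1)%N /\ gball Mg.2 /\
   Nk.2.+1%:R / c Nk.2 <= \sum_(Nk.1 <= j < Mg.1) `|Mg.2 j (v (u (x j)))|.
  move=> [N k]; have [M [g hMg]] := @step x Sinf N (k.+1%:R / c k); by exists (M, g).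
pose Ns := fix Ns k := if k is k'.+1 then (pick (Ns k', k')).1 else 0%N.
pose gs k := (pick (Ns k, k)).2.
have hNs k : (Ns k < Ns k.+1)%N by have [h _] := hpick (Ns k, k).
have hgs k : gball (gs k) by have [_ [h _]] := hpick (Ns k, k).
have hT k : k.+1%:R / c k <= \sum_(Ns k <= j < Ns k.+1) `|gs k j (v (u (x j)))|.
  by have [_ [_ h]] := hpick (Ns k, k).
have Ns_ge k : (k <= Ns k)%N.
  by elim: k => [|k IH] //; apply: leq_ltn_trans IH (hNs k).
have Ns_mono m n : (m <= n)%N -> (Ns m <= Ns n)%N.
  elim: n => [|n IH]; first by rewrite leqn0 => /eqP ->.
  rewrite leq_eqVlt => /orP[/eqP -> //|]; rewrite ltnS => /IH h.
  exact: leq_trans h (ltnW (hNs n)).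
have hex j : exists k, (j < Ns k.+1)%N by exists j; exact: Ns_ge.
pose blk j := ex_minn (hex j).
have blk_eq j k : (Ns k <= j < Ns k.+1)%N -> blk j = k.
  move=> /andP[h1 h2]; rewrite /blk; case: ex_minnP => m hm hmin.
  have hmk := hmin k h2.
  apply/eqP; rewrite eqn_leq hmk /= leqNgt; apply/negP => hlt.
  have := Ns_mono _ _ hlt; lia.
pose h := fun j => (fun z : G => c (blk j) * gs (blk j) j z) : dual (ns G).
have hin : seq_in h.
  move=> j; apply: scale_blin; exact: ((hgs (blk j)).1 j).
have hw : (weak_normr (p / (p - 1)) h <= 1)%E.
  apply: ge_ereal_sup => _ [phi hphi <-].
  have [[_ hsc _] _] := hphi.
  have ephi j : phi (h j) = c (blk j) * phi (gs (blk j) j).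
    exact: (hsc (c (blk j)) (gs (blk j) j) ((hgs (blk j)).1 j)).
  rewrite /psum.
  apply: (@le_trans _ _ (\sum_(j <oo) \sum_(k <oo)
      (c k * `|phi (gs k j)| `^ (p / (p - 1)))%:E)%E).
    apply: lee_nneseries => [i _ _|j _]; first by rewrite lee_fin powR_ge0.
    rewrite ephi.
    apply: le_trans; last first.
      apply: (@term_le_series _ (fun k => (c k * `|phi (gs k j)| `^ (p / (p - 1)))%:E) (blk j)).
      by move=> k; rewrite lee_fin mulr_ge0 ?powR_ge0 // ltW.
    by rewrite lee_fin powc_le ?c0 ?c1 ?q_ge1.
  rewrite nneseries_interchange; last first.
    by move=> i j; rewrite lee_fin mulr_ge0 ?powR_ge0 // ltW.
  apply: (le_trans _ (@geo_le1 R)).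
  apply: lee_nneseries => [i _ _|k _].
    by apply: nneseries_ge0 => j _ _; rewrite lee_fin mulr_ge0 ?powR_ge0 // ltW.
  under eq_eseriesr do rewrite EFinM.
  rewrite nneseriesZl; last by move=> j _; rewrite lee_fin powR_ge0.
  rewrite -[X in (_ <= X)%E]mule1.
  apply: lee_wpmul2l; first by rewrite lee_fin ltW.
  apply: (le_trans _ (hgs k).2).
  by apply: ereal_sup_ubound; exists phi.
have hA := @finite_g x h hx (conj hin (le_lt_trans hw (ltry 1))).
set f := fun j => `|h j (v (u (x j)))|.
have A0 : (0 <= \sum_(j <oo) (f j)%:E)%E by apply: nneseries_ge0 => n _ _; rewrite lee_fin /f normr_ge0.
have Aa : (\sum_(j <oo) (f j)%:E = (fine (\sum_(j <oo) (f j)%:E))%:E)%E.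
  by rewrite fineK // ge0_fin_numE.
move: Aa; move: (fine _) => a Aa.
have := truncnS_gt a; move: (Num.truncn a) => k hk.
have step1 : k.+1%:R <= \sum_(Ns k <= j < Ns k.+1) f j.
  have -> : \sum_(Ns k <= j < Ns k.+1) f j =
      c k * \sum_(Ns k <= j < Ns k.+1) `|gs k j (v (u (x j)))|.
    rewrite mulr_sumr; apply: eq_big_nat => j hj.
    rewrite /f /h (blk_eq j k hj) normrM (gtr0_norm (c0 k)) //.
  by move: (hT k); rewrite ler_pdivrMr // mulrC.
have step2 : \sum_(Ns k <= j < Ns k.+1) f j <= \sum_(0 <= j < Ns k.+1) f j.
  have e : \sum_(0 <= j < Ns k.+1) f j = \sum_(0 <= j < Ns k) f j + \sum_(Ns k <= j < Ns k.+1) f j.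
    by apply: big_cat_nat => //; exact: ltnW (hNs k).
  rewrite e lerDr; apply: sumr_ge0 => j _; exact: normr_ge0.
have step3 : ((\sum_(0 <= j < Ns k.+1) f j)%:E <= \sum_(j <oo) (f j)%:E)%E.
  rewrite -sumEFin; apply: nneseries_lim_ge => n _ _; rewrite lee_fin /f; exact: normr_ge0.
move: step3; rewrite Aa lee_fin => step3.
move: hk; rewrite ltNge => /negP; apply.
apply: le_trans step1 _; apply: le_trans step2 step3.
Qed.

End Main.

Theorem corollary2p11 (R : realType) (E F G : completeNormedModType R)
    (u : {linear E -> F}) (v : {linear F -> G}) (p : R) :
  1 < p -> continuous u -> continuous v ->
  abs_mid_summing (@adjoint R E F u) (p / (p - 1)) ->
  weak_mid_summing (@adjoint R F G v) (p / (p - 1)) ->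
  cohen_summing (M := ns E) (N := ns G) (v \o u) p.
Proof.
move=> p1 _ _ hU hV; exact: (@main_res R E F G u v p p1 hU hV).
Qed.
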